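(* Let $n\ge1$ and $P=\Phi^+(B_n)=\{(i,j)\colon 1\le i\le j\le 2n-1,\ i+j\ge 2n\}$. Then for $k=2,4,\dots,2n-2$ we have \[2\sum_{\substack{(i,j)\in P\\ j-i=k}}\mathbb{1}_{(i,j)}-\sum_{\substack{(i,j)\in P\\ j-i=k-1}}\mathbb{1}_{(i,j)}-\sum_{\substack{(i,j)\in P\\ j-i=k+1}}\mathbb{1}_{(i,j)}\equiv 1,\] and furthermore \[2\sum_{(i,i)\in P}\mathbb{1}_{(i,i)}-2\sum_{(i,i+1)\in P}\mathbb{1}_{(i,i+1)}\equiv 1.\]
   Context: $P$ is ordered by $(i,j)\le(i',j')$ iff $i\le i'$ and $j\le j'$. $\mathcal{J}(P)$ is the set of order ideals of $P$. For $x\in P$, $I\in\mathcal{J}(P)$: $\mathbb{1}_x(I)=1$ if $x\in I$, else $0$; $T_x^+(I)=1$ if $x$ is a minimal element of $P\setminus I$, else $0$; $T_x^-(I)=1$ if $x$ is a maximal element of $I$, else $0$; $T_x=T_x^+-T_x^-$. For $f,g\colon\mathcal{J}(P)\to\mathbb{R}$, $f\equiv g$ means $f-g=\sum_{x\in P}c_xT_x$ for some real constants $c_x$; a real number denotes the corresponding constant function. *)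

(* Defs.v *)
From HB Require Import structures.
From mathcomp Require Import all_boot all_order all_algebra.
Set Implicit Arguments. Unset Strict Implicit. Unset Printing Implicit Defensive.
Import Order.TTheory GRing.Theory Num.Theory.

Definition pos (n : nat) : finType := ('I_(2 * n) * 'I_(2 * n))%type.

Definition leP (n : nat) (x y : pos n) : bool :=
  ((x.1 : nat) <= y.1) && ((x.2 : nat) <= y.2).

Definition inP (n : nat) (x : pos n) : bool :=
  [&& 1 <= (x.1 : nat), (x.1 : nat) <= x.2, (x.2 : nat) <= 2 * n - 1
    & 2 * n <= (x.1 : nat) + x.2].

Definition Pset (n : nat) : {set pos n} := [set x | inP x].

Definition is_ideal (n : nat) (I : {set pos n}) : bool :=
  (I \subset Pset n) &&
  [forall x, forall y, [&& x \in I, y \in Pset n & leP y x] ==> (y \in I)].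

Section Funs.
Variable R : realFieldType.
Local Open Scope ring_scope.

Definition ind (n : nat) (x : pos n) (I : {set pos n}) : R :=
  if x \in I then 1 else 0.

Definition Tplus (n : nat) (x : pos n) (I : {set pos n}) : R :=
  if [&& x \in Pset n, x \notin I &
        [forall y, [&& y \in Pset n, y \notin I & leP y x] ==> (y == x)]]
  then 1 else 0.

Definition Tminus (n : nat) (x : pos n) (I : {set pos n}) : R :=
  if [&& x \in I & [forall y, [&& y \in I & leP x y] ==> (y == x)]]
  then 1 else 0.

Definition toggle (n : nat) (x : pos n) (I : {set pos n}) : R :=
  Tplus x I - Tminus x I.

(* f == g on J(P): f - g is a real linear combination of the toggles T_x,
   x in P, as functions on the order ideals of P. *)
Definition tequiv (n : nat) (f g : {set pos n} -> R) : Prop :=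
  exists c : pos n -> R, forall I : {set pos n}, is_ideal I ->
    f I - g I = \sum_(x in Pset n) c x * toggle x I.

Definition diagsum (n d : nat) (I : {set pos n}) : R :=
  \sum_(x in Pset n | (x.2 : nat) == (x.1 + d)%N) ind x I.
End Funs.

(* Main.v *)
Require Import Defs.
From mathcomp Require Import all_boot all_order all_algebra.
From mathcomp Require Import zify.
From mathcomp Require Import ring lra.
Import Order.TTheory GRing.Theory Num.Theory.
Set Implicit Arguments. Unset Strict Implicit. Unset Printing Implicit Defensive.

Definition inPn (n i j : nat) : bool :=
  [&& 1 <= i, i <= j, j <= 2 * n - 1 & 2 * n <= i + j].
Definition mem2 (n : nat) (I : {set pos n}) (a b : nat) : bool :=
  [exists x in I, ((x.1 : nat) == a) && ((x.2 : nat) == b)].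


Lemma pos_eq n (x y : pos n) : (x.1 : nat) = y.1 -> (x.2 : nat) = y.2 -> x = y.
Proof. case: x y => [a b] [c d] /= h1 h2; congr pair; exact: val_inj. Qed.

Lemma mem2E n (I : {set pos n}) (x : pos n) : mem2 I x.1 x.2 = (x \in I).
Proof.
apply/existsP/idP => [[y /andP[yI /andP[/eqP h1 /eqP h2]]] | xI]; last first.
  by exists x; rewrite xI !eqxx.
by rewrite -(pos_eq h1 h2).
Qed.

Lemma mem2_inP n (I : {set pos n}) (hI : is_ideal I) a b : mem2 I a b -> inPn n a b.
Proof.
move=> /existsP[y /andP[yI /andP[/eqP <- /eqP <-]]].
move/andP: hI => [/subsetP sub _]; have := sub y yI; by rewrite inE.
Qed.

Lemma ideal_down n (I : {set pos n}) (hI : is_ideal I) a b c d :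
  inPn n a b -> (a <= c)%N -> (b <= d)%N -> mem2 I c d -> mem2 I a b.
Proof.
move=> hab hac hbd /existsP[y /andP[yI /andP[/eqP e1 /eqP e2]]].
have ha : (a < 2 * n)%N by move: hab; rewrite /inPn; lia.
have hb : (b < 2 * n)%N by move: hab; rewrite /inPn; lia.
apply/existsP; exists (Ordinal ha, Ordinal hb); rewrite /= !eqxx !andbT.
move/andP: hI => [_ /forallP H].
move: (H y) => /forallP /(_ (Ordinal ha, Ordinal hb)) /implyP; apply.
rewrite yI inE /=; apply/andP; split; first exact: hab. by rewrite /Defs.leP /= e1 e2 hac hbd.
Qed.
Definition TpB n (I : {set pos n}) i j : bool :=
  [&& inPn n i j, ~~ mem2 I i j, inPn n (i-1) j ==> mem2 I (i-1) j
    & inPn n i (j-1) ==> mem2 I i (j-1)].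
Definition TmB n (I : {set pos n}) i j : bool :=
  [&& mem2 I i j, inPn n (i+1) j ==> ~~ mem2 I (i+1) j
    & inPn n i (j+1) ==> ~~ mem2 I i (j+1)].

Lemma mkpos n a b : inPn n a b -> {y : pos n | (y.1 : nat) = a /\ (y.2 : nat) = b}.
Proof.
move=> hab.
have ha : (a < 2 * n)%N by move: hab; rewrite /inPn; lia.
have hb : (b < 2 * n)%N by move: hab; rewrite /inPn; lia.
by exists (Ordinal ha, Ordinal hb).
Qed.

Lemma TpBE n (I : {set pos n}) (hI : is_ideal I) (x : pos n) :
  [&& x \in Pset n, x \notin I &
        [forall y, [&& y \in Pset n, y \notin I & Defs.leP y x] ==> (y == x)]]
  = TpB I x.1 x.2.
Proof.
rewrite /TpB inE mem2E; apply/and3P/and4P.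
- move=> [px nx /forallP F]; split => //.
  + apply/implyP => hc; apply: contraT => hm.
    have [c [c1 c2]] := mkpos hc.
    have := F c; rewrite inE.
    have -> : inP c by rewrite /inP c1 c2.
    rewrite -mem2E c1 c2 hm /Defs.leP c1 c2 /=.
    have -> : (x.1 - 1 <= x.1)%N by lia.
    rewrite leqnn /= => /eqP cx; move: c1; rewrite cx; move: px; rewrite /inP; lia.
  + apply/implyP => hc; apply: contraT => hm.
    have [c [c1 c2]] := mkpos hc.
    have := F c; rewrite inE.
    have -> : inP c by rewrite /inP c1 c2.
    rewrite -mem2E c1 c2 hm /Defs.leP c1 c2 /=.
    have -> : (x.2 - 1 <= x.2)%N by lia.
    rewrite leqnn /= => /eqP cx; move: c2; rewrite cx; move: px; rewrite /inP; lia.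
- move=> [px nx h1 h2]; split => //; apply/forallP => y; apply/implyP.
  rewrite inE => /and3P[py ny /andP[l1 l2]].
  case: (eqVneq y x) => // ne; exfalso.
  have [lt1|eq1] : (y.1 < x.1)%N \/ (y.1 : nat) = x.1 by lia.
  + have hc : inPn n (x.1 - 1) x.2 by move: py px; rewrite /inP /inPn; lia.
    have a1 : (y.1 <= x.1 - 1)%N by lia.
    have := ideal_down hI py a1 l2 (implyP h1 hc).
    by rewrite mem2E (negbTE ny).
  + have lt2 : (y.2 < x.2)%N.
      have : (y.2 : nat) <> x.2 by move=> e; move: ne; rewrite (pos_eq eq1 e) eqxx.
      lia.
    have hc : inPn n x.1 (x.2 - 1) by move: py px; rewrite /inP /inPn; lia.
    have a2 : (y.2 <= x.2 - 1)%N by lia.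
    have := ideal_down hI py l1 a2 (implyP h2 hc).
    by rewrite mem2E (negbTE ny).
Qed.

Lemma TmBE n (I : {set pos n}) (hI : is_ideal I) (x : pos n) :
  [&& x \in I & [forall y, [&& y \in I & Defs.leP x y] ==> (y == x)]]
  = TmB I x.1 x.2.
Proof.
rewrite /TmB mem2E; apply/andP/and3P.
- move=> [xI /forallP F]; have px := mem2_inP hI (etrans (mem2E I x) xI); split => //.
  + apply/implyP => hc; apply/negP => hm.
    have [c [c1 c2]] := mkpos hc.
    have := F c.
    rewrite -mem2E c1 c2 hm /Defs.leP c1 c2 /=.
    have -> : (x.1 <= x.1 + 1)%N by lia.
    rewrite leqnn /= => /eqP cx; move: c1; rewrite cx; lia.
  + apply/implyP => hc; apply/negP => hm.
    have [c [c1 c2]] := mkpos hc.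
    have := F c.
    rewrite -mem2E c1 c2 hm /Defs.leP c1 c2 /=.
    have -> : (x.2 <= x.2 + 1)%N by lia.
    rewrite leqnn /= => /eqP cx; move: c2; rewrite cx; lia.
- move=> [xI h1 h2]; split => //; apply/forallP => y; apply/implyP.
  move=> /andP[yI /andP[l1 l2]].
  have px := mem2_inP hI (etrans (mem2E I x) xI).
  have py := mem2_inP hI (etrans (mem2E I y) yI).
  case: (eqVneq y x) => // ne; exfalso.
  have [lt2|eq2] : (x.2 < y.2)%N \/ (y.2 : nat) = x.2 by lia.
  + have hc : inPn n x.1 (x.2 + 1) by move: py px; rewrite /inPn; lia.
    have a2 : (x.2 + 1 <= y.2)%N by lia.
    have := ideal_down hI hc l1 a2 (etrans (mem2E I y) yI).
    by rewrite (negbTE (implyP h2 hc)).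
  + have lt1 : (x.1 < y.1)%N.
      have : (y.1 : nat) <> x.1 by move=> e; move: ne; rewrite (pos_eq e eq2) eqxx.
      lia.
    have hc : inPn n (x.1 + 1) x.2 by move: py px; rewrite /inPn; lia.
    have a1 : (x.1 + 1 <= y.1)%N by lia.
    have := ideal_down hI hc a1 l2 (etrans (mem2E I y) yI).
    by rewrite (negbTE (implyP h1 hc)).
Qed.
Local Open Scope ring_scope.

Lemma sum_diag (R : realFieldType) n (d : nat) (F : pos n -> R) (G : nat -> nat -> R) :
  (forall x : pos n, F x = G x.1 x.2) -> (forall i j, (2*n <= j)%N -> G i j = 0) ->
  \sum_(x : pos n | (x.2 : nat) == (x.1 + d)%N) F x = \sum_(0 <= i < 2*n) G i (i + d).
Proof.
move=> HF HG; rewrite big_mkcond.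
transitivity (\sum_(i : 'I_(2*n)) \sum_(j : 'I_(2*n))
    (if (j : nat) == (i + d)%N then G i j else 0)).
  rewrite pair_bigA; apply: eq_bigr => -[i j] _ /=; by rewrite HF.
rewrite big_mkord; apply: eq_bigr => i _.
case: (ltnP (i + d) (2 * n)) => h.
- rewrite (bigD1 (Ordinal h)) //= eqxx big1 ?addr0 // => j hj.
  case: eqP => // e; move: hj; by rewrite (_ : j = Ordinal h) ?eqxx //; apply: val_inj.
- rewrite HG // big1 // => j _; case: eqP => // e; exfalso; have := ltn_ord j; lia.
Qed.

Lemma sum_ind01 (R : realFieldType) (s N : nat) :
  \sum_(0 <= i < N) (if (i == s)%N then 1 else 0 : R) = if (s < N)%N then 1 else 0.
Proof.
elim: N => [|N IH]; first by rewrite big_geq.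
rewrite big_nat_recr //= IH; case: (ltngtP s N) => h.
- by rewrite addr0 ltnS ltnW.
- by rewrite addr0 ltnS leqNgt h.
- by rewrite add0r h ltnSn.
Qed.
Definition bR (R : realFieldType) (b : bool) : R := if b then 1 else 0.

Lemma loc1 (R : realFieldType) (pX pX' py pz mX mX' mY mZ : bool) :
 (mX ==> pX) && (mX' ==> pX') && (mY ==> py) && (mZ ==> pz) &&
   (py ==> (mX' ==> mY)) && (pz ==> (mX' ==> mZ)) && (pX ==> (mY ==> mX)) && (pX ==> (mZ ==> mX)) &&
   (py == pX && pX') && (pz ==> pX) && ((pX && pX') ==> pz) ->
 bR R [&& pX', ~~ mX', py ==> mY & pz ==> mZ] - bR R [&& mX, pz ==> ~~ mZ & py ==> ~~ mY]
 = bR R mY + bR R mZ - bR R mX - bR R mX' + bR R (pX' && ~~ pX).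
Proof.
by case: pX pX' py pz mX mX' mY mZ => [] [] [] [] [] [] [] [] //= _; rewrite /bR /=; lra.
Qed.

Lemma loc0 (R : realFieldType) (pX pX' py mX mX' mY : bool) :
 (mX ==> pX) && (mX' ==> pX') && (mY ==> py) &&
   (py ==> (mX' ==> mY)) && (pX ==> (mY ==> mX)) && (py == pX && pX') ->
 bR R [&& pX', ~~ mX' & py ==> mY] - bR R [&& mX & py ==> ~~ mY]
 = bR R mY *+ 2 - bR R mX - bR R mX' + bR R (pX' && ~~ pX).
Proof.
by case: pX pX' py mX mX' mY => [] [] [] [] [] [] //= _; rewrite /bR /=; lra.
Qed.

Lemma mem2_lt n (I : {set pos n}) (hI : is_ideal I) i j : mem2 I i j -> (j < 2 * n)%N.
Proof. by move/(mem2_inP hI); rewrite /inPn; lia. Qed.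

Lemma diagsumE (R : realFieldType) n d (I : {set pos n}) (hI : is_ideal I) :
  diagsum R d I = \sum_(0 <= i < 2 * n) bR R (mem2 I i (i + d)).
Proof.
rewrite /diagsum big_mkcondl /=.
rewrite (@sum_diag R n d _ (fun i j => bR R (mem2 I i j))).
- by [].
- move=> x; rewrite mem2E /ind /bR; case: ifP => // xP; case: ifP => // xI.
  by move/andP: hI => [/subsetP sub _]; move: xP; rewrite (sub x xI).
- move=> i j hj; rewrite /bR; case: ifP => // /(mem2_lt hI); lia.
Qed.

Lemma togsumE (R : realFieldType) n k (I : {set pos n}) (hI : is_ideal I) :
  \sum_(x in Pset n) (- bR R ((x.2 : nat) == (x.1 + k)%N)) * toggle R x I
  = - \sum_(0 <= i < 2 * n) (bR R (TpB I i (i + k)) - bR R (TmB I i (i + k))).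
Proof.
rewrite -sumrN -(@sum_diag R n k (fun x => - toggle R x I) (fun i j => - (bR R (TpB I i j) - bR R (TmB I i j)))); first last.
- move=> i j hj; rewrite /bR.
  have -> : TpB I i j = false by rewrite /TpB /inPn; apply/negbTE; lia.
  have -> : TmB I i j = false.
    by rewrite /TmB; case: (boolP (mem2 I i j)) => // /(mem2_lt hI); lia.
  by rewrite subrr oppr0.
- by move=> x; rewrite /toggle /Tplus /Tminus TpBE // TmBE.
rewrite big_mkcond [RHS]big_mkcond; apply: eq_bigr => x _.
case: (boolP (x \in Pset n)) => xP.
- by rewrite /bR; case: ifP => _; [rewrite mulN1r | rewrite oppr0 mul0r].
- have -> : toggle R x I = 0.
    rewrite /toggle /Tplus /Tminus (negbTE xP) /=.
    have -> : x \in I = false.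
      apply/negP => xI; move/andP: hI => [/subsetP sub _].
      by move: xP; rewrite (sub x xI).
    by rewrite subrr.
  by rewrite oppr0 if_same.
Qed.

Lemma shift_sum (R : realFieldType) (f : nat -> R) N :
  f 0%N = 0 -> f N = 0 -> \sum_(0 <= i < N) f i = \sum_(0 <= i < N) f (i + 1)%N.
Proof.
move=> h0 hN.
have e1 : \sum_(0 <= i < N.+1) f i = \sum_(0 <= i < N) f i + f N by rewrite big_nat_recr.
have e2 : \sum_(0 <= i < N.+1) f i = f 0%N + \sum_(0 <= i < N) f i.+1 by rewrite big_nat_recl.
move: e1 e2; rewrite hN h0 addr0 add0r => <- ->.
by apply: eq_bigr => i _; rewrite addn1.
Qed.
Lemma bR_mem0 (R : realFieldType) n (I : {set pos n}) (hI : is_ideal I) a b :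
  ~~ inPn n a b -> bR R (mem2 I a b) = 0.
Proof. by move=> H; rewrite /bR; case: ifP => // /(mem2_inP hI); rewrite (negbTE H). Qed.

Lemma main1 (R : realFieldType) n k h (I : {set pos n}) (hI : is_ideal I)
  (hn : (1 <= n)%N) (hk : k = (h + h)%N) (h1 : (1 <= h)%N) (h2 : (h <= n - 1)%N) :
  \sum_(0 <= i < 2 * n) (bR R (TpB I i (i + k)) - bR R (TmB I i (i + k)))
  = \sum_(0 <= i < 2 * n) bR R (mem2 I i (i + k.+1))
    + \sum_(0 <= i < 2 * n) bR R (mem2 I i (i + k.-1))
    - (\sum_(0 <= i < 2 * n) bR R (mem2 I i (i + k))) *+ 2 + 1.
Proof.
rewrite sumrB (@shift_sum R (fun i => bR R (TpB I i (i + k)))); first last.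
- rewrite /bR /TpB (_ : inPn n (2 * n) (2 * n + k) = false) //.
  by rewrite /inPn; lia.
- by rewrite /bR /TpB.
rewrite -sumrB.
have L : forall i, bR R (TpB I (i + 1) (i + 1 + k)) - bR R (TmB I i (i + k)) =
   bR R (mem2 I i (i + k + 1)) + bR R (mem2 I (i + 1) (i + k)) - bR R (mem2 I i (i + k))
   - bR R (mem2 I (i + 1) (i + k + 1)) + bR R (i == n - 1 - h)%N.
  move=> i.
  have S : (inPn n (i + 1) (i + k + 1) && ~~ inPn n i (i + k)) = (i == n - 1 - h)%N.
    by rewrite /inPn; apply/idP/idP; lia.
  rewrite -S /TpB /TmB (_ : (i + 1 + k = i + k + 1)%N); last by lia.
  rewrite !addnK.
  apply: loc1; repeat (apply/andP; split);   try (apply/implyP; exact: (mem2_inP hI));   try (apply/implyP => hp; apply/implyP => hm; apply: (ideal_down hI hp _ _ hm); lia);   try (apply/eqP; rewrite /inPn; apply/idP/idP; lia);   try (rewrite /inPn; apply/implyP; lia).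
rewrite (eq_bigr _ (fun i _ => L i)).
rewrite !big_split /= !sumrN.
have EY : \sum_(0 <= i < 2 * n) bR R (mem2 I i (i + k + 1))
        = \sum_(0 <= i < 2 * n) bR R (mem2 I i (i + k.+1)).
  by apply: eq_bigr => i _; rewrite (_ : (i + k + 1 = i + k.+1)%N) //; lia.
have EZ : \sum_(0 <= i < 2 * n) bR R (mem2 I (i + 1) (i + k))
        = \sum_(0 <= i < 2 * n) bR R (mem2 I i (i + k.-1)).
  rewrite (@shift_sum R (fun i => bR R (mem2 I i (i + k.-1)))).
  - by apply: eq_bigr => i _; rewrite (_ : (i + 1 + k.-1 = i + k)%N) //; lia.
  - by rewrite /= (bR_mem0 _ hI) // /inPn; lia.
  - by rewrite /= (bR_mem0 _ hI) // /inPn; lia.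
have EX : \sum_(0 <= i < 2 * n) bR R (mem2 I (i + 1) (i + k + 1))
        = \sum_(0 <= i < 2 * n) bR R (mem2 I i (i + k)).
  rewrite (@shift_sum R (fun i => bR R (mem2 I i (i + k)))).
  - by apply: eq_bigr => i _; rewrite (_ : (i + 1 + k = i + k + 1)%N) //; lia.
  - by rewrite /= (bR_mem0 _ hI) // /inPn; lia.
  - by rewrite /= (bR_mem0 _ hI) // /inPn; lia.
have ES : \sum_(0 <= i < 2 * n) bR R (i == n - 1 - h)%N = 1.
  rewrite /bR sum_ind01 (_ : (n - 1 - h < 2 * n)%N = true) //; lia.
rewrite EY EZ EX ES mulr2n; lra.
Qed.

Lemma main0 (R : realFieldType) n (I : {set pos n}) (hI : is_ideal I)
  (hn : (1 <= n)%N) :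
  \sum_(0 <= i < 2 * n) (bR R (TpB I i (i + 0)) - bR R (TmB I i (i + 0)))
  = (\sum_(0 <= i < 2 * n) bR R (mem2 I i (i + 1))) *+ 2
    - (\sum_(0 <= i < 2 * n) bR R (mem2 I i (i + 0))) *+ 2 + 1.
Proof.
rewrite sumrB (@shift_sum R (fun i => bR R (TpB I i (i + 0)))); first last.
- rewrite /bR /TpB (_ : inPn n (2 * n) (2 * n + 0) = false) //.
  by rewrite /inPn; lia.
- by rewrite /bR /TpB.
rewrite -sumrB.
have L : forall i, bR R (TpB I (i + 1) (i + 1 + 0)) - bR R (TmB I i (i + 0)) =
   bR R (mem2 I i (i + 1)) *+ 2 - bR R (mem2 I i (i + 0))
   - bR R (mem2 I (i + 1) (i + 1 + 0)) + bR R (i == n - 1)%N.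
  move=> i.
  have S : (inPn n (i + 1) (i + 1 + 0) && ~~ inPn n i (i + 0)) = (i == n - 1)%N.
    by rewrite /inPn; apply/idP/idP; lia.
  rewrite -S /TpB /TmB !addn0 !addnK.
  rewrite (_ : inPn n (i + 1) i = false) /=; last by rewrite /inPn; lia.
  rewrite andbT.
  apply: loc0; repeat (apply/andP; split);   try (apply/implyP; exact: (mem2_inP hI));   try (apply/implyP => hp; apply/implyP => hm; apply: (ideal_down hI hp _ _ hm); lia);   try (apply/eqP; rewrite /inPn; apply/idP/idP; lia);   try (rewrite /inPn; apply/implyP; lia).
rewrite (eq_bigr _ (fun i _ => L i)).
rewrite !big_split /= !sumrN.
have EX : \sum_(0 <= i < 2 * n) bR R (mem2 I (i + 1) (i + 1 + 0))
        = \sum_(0 <= i < 2 * n) bR R (mem2 I i (i + 0)).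
  rewrite (@shift_sum R (fun i => bR R (mem2 I i (i + 0)))).
  - by [].
  - by rewrite /= (bR_mem0 _ hI) // /inPn; lia.
  - by rewrite /= (bR_mem0 _ hI) // /inPn; lia.
have ES : \sum_(0 <= i < 2 * n) bR R (i == n - 1)%N = 1.
  rewrite /bR sum_ind01 (_ : (n - 1 < 2 * n)%N = true) //; lia.
rewrite EX ES !mulr2n; lra.
Qed.

Unset Implicit Arguments.

Theorem theorem3p37 (R : realFieldType) (n : nat) (hn : (1 <= n)%N) :
  (forall k : nat, (2 <= k)%N -> (k <= 2 * n - 2)%N -> ~~ odd k ->
     tequiv (fun I : {set pos n} =>
               2 * diagsum R k I - diagsum R k.-1 I - diagsum R k.+1 I)
            (fun _ => 1))
  /\
  tequiv (fun I : {set pos n} => 2 * diagsum R 0 I - 2 * diagsum R 1 I)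
         (fun _ => 1).
Proof.
split.
- move=> k hk2 hk oddk.
  have e := odd_double_half k; rewrite (negbTE oddk) add0n -addnn in e.
  exists (fun x : pos n => - bR R ((x.2 : nat) == (x.1 + k)%N)) => I hI /=.
  rewrite togsumE // !diagsumE // (@main1 R n k k./2 I hI hn); [|lia|lia|lia].
  rewrite mulr2n; lra.
- exists (fun x : pos n => - bR R ((x.2 : nat) == (x.1 + 0)%N)) => I hI /=.
  rewrite togsumE // !diagsumE // main0 // !mulr2n; lra.
Qed.
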